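(* Consider the constrained nonlinear system $x(k+1)=f(x(k),u(k))$ with $f(0,0)=0$, input constraint $u\in\mathcal{U}=\{u=[u_1,\dots,u_m]^T\in\mathbb{R}^m:|u_i|\le\bar u_i,\ i=1,\dots,m\}$ and state constraint $x\in\mathcal{X}$ with $0\in\mathcal{X}$. For a horizon $N\ge 1$ and a stage cost $l$, let $$J(x(k),U(k|k))=\sum_{i=0}^{N-1} l\big(x(k+i+1|k),u(k+i|k)\big),$$ where $U(k|k)=[u(k|k)^T,\dots,u(k+N-1|k)^T]^T$, $x(k|k)=x(k)$ and $x(k+i+1|k)=f(x(k+i|k),u(k+i|k))$, and let $J^*(x(k))=\min J(x(k),U(k|k))$ over $u(k+i|k)\in\mathcal{U}$ subject to the dynamics and $x(k+i+1|k)\in\mathcal{X}$, $i=0,\dots,N-1$, with optimal control sequence $u^*(k|k),\dots,u^*(k+N-1|k)$ and optimal predicted states $x^*(k+1|k),\dots,x^*(k+N|k)$. The MPC law applies $u(k)=u^*(k|k)$. Assume there exist $\alpha_1,\alpha_2\in\mathcal{K}_\infty$ with $\alpha_1(\|x\|)\le J^*(x)\le\alpha_2(\|x\|)$ for all $x\in\mathcal{X}$. Suppose the optimisation problem is feasible at the initial state $x(0)=x_0$ and that (at each time $k$ at which it is solved) there exists a control $u(k+N|k)\in\mathcal{U}$ such that $x(k+N+1|k)=f(x^*(k+N|k),u(k+N|k))\in\mathcal{X}$ and $$l\big(x(k+N+1|k),u(k+N|k)\big)-l\big(x^*(k+1|k),u^*(k|k)\big)\le 0.$$ Then (1) the optimisation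 problem is recursively feasible, and (2) the closed-loop system under this MPC algorithm is stable.
   Context: A function $\phi:\mathbb{R}_+\to\mathbb{R}_+$ is of class $\mathcal{K}$ if it is continuous, strictly increasing and $\phi(0)=0$; it is of class $\mathcal{K}_\infty$ if in addition it is radially unbounded. Stability refers to stability of the origin of the closed-loop system $x(k+1)=f(x(k),u^*(k|k))$. *)

(* Defs.v *)
From HB Require Import structures.
From mathcomp Require Import all_boot all_order all_algebra.
From mathcomp Require Import all_classical all_reals all_analysis.
Set Implicit Arguments. Unset Strict Implicit. Unset Printing Implicit Defensive.
Import Order.TTheory GRing.Theory Num.Theory.
Import numFieldNormedType.Exports.
Local Open Scope classical_set_scope.
Local Open Scope ring_scope.

Section MPC.
Variable R : realType.

Definition classK (phi : R -> R) : Prop :=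
  {within [set x : R | 0 <= x], continuous phi} /\
  (forall x y : R, 0 <= x -> x < y -> phi x < phi y) /\
  phi 0 = 0.

Definition classKinf (phi : R -> R) : Prop :=
  classK phi /\ (forall M : R, exists r : R, 0 <= r /\ M <= phi r).

Variables (n m : nat).
Notation state := 'rV[R]_n.
Notation input := 'rV[R]_m.

Definition inU (ubar : input) (u : input) : Prop :=
  forall i : 'I_m, `|u ord0 i| <= ubar ord0 i.

(* predicted state x(k+i|k) from x(k|k) = x under the input sequence U *)
Fixpoint pred_state (f : state -> input -> state) (x : state)
  (U : nat -> input) (i : nat) : state :=
  match i with
  | 0 => x
  | i'.+1 => f (pred_state f x U i') (U i')
  end.

Definition Jcost (f : state -> input -> state) (l : state -> input -> R)
  (N : nat) (x : state) (U : nat -> input) : R :=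
  \sum_(i < N) l (pred_state f x U i.+1) (U i).

Definition feasible_seq (f : state -> input -> state) (X : set state)
  (ubar : input) (N : nat) (x : state) (U : nat -> input) : Prop :=
  forall i : nat, (i < N)%N -> inU ubar (U i) /\ X (pred_state f x U i.+1).

Definition feasible f X ubar N (x : state) : Prop :=
  exists U, feasible_seq f X ubar N x U.

Definition optimal f X ubar (l : state -> input -> R) N (x : state)
  (U : nat -> input) : Prop :=
  feasible_seq f X ubar N x U /\
  forall V, feasible_seq f X ubar N x V -> Jcost f l N x U <= Jcost f l N x V.

(* closed loop x(k+1) = f(x(k), u*(k|k)), where sel x is the optimal
   sequence computed at state x *)
Fixpoint closed_loop (f : state -> input -> state)
  (sel : state -> nat -> input) (x0 : state) (k : nat) : state :=
  match k with
  | 0 => x0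
  | k'.+1 => f (closed_loop f sel x0 k') (sel (closed_loop f sel x0 k') 0%N)
  end.

End MPC.

(* Main.v *)
Require Import Defs.
From HB Require Import structures.
From mathcomp Require Import all_boot all_order all_algebra.
From mathcomp Require Import all_classical all_reals all_analysis.
From mathcomp Require Import lra.
Import Order.TTheory GRing.Theory Num.Theory.
Import numFieldNormedType.Exports.
Local Open Scope classical_set_scope.
Local Open Scope ring_scope.

Lemma classK_small (R : realType) (phi : R -> R) : classK phi ->
  forall e : R, 0 < e -> exists d : R, 0 < d /\ phi d < e.
Proof.
move=> [cphi [_ phi0]] e e0.
have H0 := (proj1 (subspace_continuousP _ _) cphi 0 (lexx 0)).
move: H0; rewrite /from_subspace /= phi0.
move/cvgrPdist_lt => /(_ e e0). 
rewrite /within /= => /nbhs_ballP [d /= d0 H].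
exists (d/2); split; first by rewrite divr_gt0.
have := H (d/2).
rewrite sub0r normrN => H2.
apply: le_lt_trans (ler_norm _) _; apply: H2.
  rewrite /ball /= sub0r normrN gtr0_norm ?divr_gt0 //. 
  by rewrite ltr_pdivrMr // ltr_pMr // ltr1n.
by rewrite /= ltW // divr_gt0.
Qed.

Lemma shift_state (R : realType) (n m : nat)
  (f : 'rV[R]_n -> 'rV[R]_m -> 'rV[R]_n) (U V : nat -> 'rV[R]_m) (x : 'rV[R]_n) (M : nat) :
  (forall i, (i < M)%N -> V i = U i.+1) ->
  forall i, (i <= M)%N -> pred_state f (f x (U 0%N)) V i = pred_state f x U i.+1.
Proof.
move=> HV; elim=> [|i IH] Hi //=.
rewrite IH ?HV //; exact: ltnW.
Qed.

Lemma step (R : realType) (n m : nat)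
  (f : 'rV[R]_n -> 'rV[R]_m -> 'rV[R]_n) (X : set 'rV[R]_n)
  (ubar : 'rV[R]_m) (l : 'rV[R]_n -> 'rV[R]_m -> R) (N : nat)
  (sel : 'rV[R]_n -> nat -> 'rV[R]_m) :
  (1 <= N)%N ->
  (forall x, feasible f X ubar N x -> optimal f X ubar l N x (sel x)) ->
  (forall x, feasible f X ubar N x ->
     exists v, inU ubar v /\
       X (f (pred_state f x (sel x) N) v) /\
       l (f (pred_state f x (sel x) N) v) v
         - l (pred_state f x (sel x) 1) (sel x 0%N) <= 0) ->
  forall x, feasible f X ubar N x ->
  let x1 := f x (sel x 0%N) in
  [/\ feasible f X ubar N x1, X x1 &
      Jcost f l N x1 (sel x1) <= Jcost f l N x (sel x)].
Proof.
move=> N1 Hsel Hterm x Fx x1.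
have [FS _] := Hsel x Fx.
have [v [Uv [Xv Lv]]] := Hterm x Fx.
case: N N1 Hsel Hterm Fx FS Xv Lv => [//|M] _ Hsel Hterm Fx FS Xv Lv.
pose V := fun i => if (i < M)%N then sel x i.+1 else v.
have HV : forall i, (i < M)%N -> V i = sel x i.+1 by move=> i Hi; rewrite /V Hi.
have Hs := @shift_state R n m f _ _ x M HV.
have HVM : V M = v by rewrite /V ltnn.
have HlastV : pred_state f x1 V M.+1 = f (pred_state f x (sel x) M.+1) v.
  by rewrite /= Hs // HVM.
have FV : feasible_seq f X ubar M.+1 x1 V.
  move=> i Hi; case: (ltngtP i M) => Him.
  - rewrite HV //; have [? _] := FS i.+1 Him; split => //.
    rewrite Hs //; first by have [_ ?] := FS i.+1 Him.
  - by rewrite ltnS leqNgt Him in Hi.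
  - by subst i; rewrite HVM HlastV.
have X1 : X x1 by have [_ ?] := FS 0%N isT.
split => //; first by exists V.
have [_ Hopt] := Hsel x1 (ex_intro _ V FV).
apply: le_trans (Hopt V FV) _.
have E1 : Jcost f l M.+1 x1 V =
   \sum_(i < M) l (pred_state f x (sel x) i.+2) (sel x i.+1)
   + l (f (pred_state f x (sel x) M.+1) v) v.
  rewrite /Jcost big_ord_recr HlastV HVM; congr (_ + _).
  apply: eq_bigr => i _; rewrite HV; last exact: (ltn_ord i); have HH := (Hs i.+1 (ltn_ord i)). by rewrite -HH.
have E2 : Jcost f l M.+1 x (sel x) =
   l x1 (sel x 0%N) + \sum_(i < M) l (pred_state f x (sel x) i.+2) (sel x i.+1).
  by rewrite /Jcost big_ord_recl.
rewrite E1 E2.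
move: Lv; rewrite -[pred_state f x (sel x) 1]/x1.
set A := \sum_(i < M) _; set B := l _ v; set C := l x1 _.
move=> Lv; rewrite addrC lerD2r -subr_le0 //.
Qed.

Theorem theorem4 (R : realType) (n m : nat)
  (f : 'rV[R]_n -> 'rV[R]_m -> 'rV[R]_n) (X : set 'rV[R]_n)
  (ubar : 'rV[R]_m) (l : 'rV[R]_n -> 'rV[R]_m -> R) (N : nat)
  (alpha1 alpha2 : R -> R) (sel : 'rV[R]_n -> nat -> 'rV[R]_m)
  (x0 : 'rV[R]_n) :
  f 0 0 = 0 ->
  X 0 ->
  (1 <= N)%N ->
  classKinf alpha1 -> classKinf alpha2 ->
  (forall x, X x -> forall U, optimal f X ubar l N x U ->
     alpha1 `|x| <= Jcost f l N x U /\ Jcost f l N x U <= alpha2 `|x|) ->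
  (* the MPC law uses an optimal sequence whenever the problem is feasible *)
  (forall x, feasible f X ubar N x -> optimal f X ubar l N x (sel x)) ->
  (* terminal condition, at every state where the problem is solved *)
  (forall x, feasible f X ubar N x ->
     exists v, inU ubar v /\
       X (f (pred_state f x (sel x) N) v) /\
       l (f (pred_state f x (sel x) N) v) v
         - l (pred_state f x (sel x) 1) (sel x 0%N) <= 0) ->
  feasible f X ubar N x0 ->
  (* (1) recursive feasibility *)
  (forall k, feasible f X ubar N (closed_loop f sel x0 k)) /\
  (* (2) Lyapunov stability of the origin of the closed loop *)
  (forall eps : R, 0 < eps -> exists delta : R, 0 < delta /\
     forall y0, X y0 -> feasible f X ubar N y0 -> `|y0| < delta ->
       forall k, `|closed_loop f sel y0 k| < eps).

Proof.
move=> f00 X0 N1 a1K a2K Hbd Hsel Hterm F0.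
have St := @step R n m f X ubar l N sel N1 Hsel Hterm.
have Inv : forall y0, X y0 -> feasible f X ubar N y0 -> forall k,
   [/\ feasible f X ubar N (closed_loop f sel y0 k), X (closed_loop f sel y0 k) &
       Jcost f l N (closed_loop f sel y0 k) (sel (closed_loop f sel y0 k))
         <= Jcost f l N y0 (sel y0)].
  move=> y0 Xy Fy; elim=> [|k [Fk Xk Jk]] /=; first by split.
  have [F1 X1 J1] := St _ Fk; split => //; exact: le_trans J1 Jk.
split.
  move=> k.
  elim: k => [|k IH] //=; by have [] := St _ IH.
move=> eps eps0.
have [[_ [a1m a10]] _] := a1K.
have e1 : 0 < alpha1 eps by rewrite -a10; apply: a1m.
have [d [d0 Hd]] := @classK_small R _ a2K.1 _ e1.
exists d; split => // y0 Xy Fy Hy k.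
have [Fk Xk Jk] := Inv y0 Xy Fy k.
have [B1 _] := Hbd _ Xk _ (Hsel _ Fk).
have [_ B2] := Hbd _ Xy _ (Hsel _ Fy).
have [[_ [a2m _]] _] := a2K.
have L : alpha1 `|closed_loop f sel y0 k| < alpha1 eps.
  apply: le_lt_trans B1 _; apply: le_lt_trans Jk _; apply: le_lt_trans B2 _.
  apply: lt_trans Hd; exact: a2m.
rewrite ltNge; apply/negP => H.
move: H; rewrite le_eqVlt => /orP [/eqP E|H].
  by move: L; rewrite E ltxx.
have := a1m _ _ (ltW eps0) H.
by rewrite ltNge (ltW L).
Qed.
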